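(* Let $\Lambda:\mathrm{Lip}_C^\sigma(\tilde\Omega)\times\tilde\Omega\to\mathbb{R}^{d'}$ be a causal identifiable in-context map. Then (i) for all $(\mu,x,t)\in\mathrm{Lip}_C^\sigma(\tilde\Omega)\times\tilde\Omega$, $\Lambda(\mu,x,t)=\bar\Lambda(\mu_t,x)$; (ii) if moreover $\Lambda$ is continuous (weak$^*$ $\times$ Euclidean), then the map $\mathcal{X}_C^\sigma\ni(\nu,x)\mapsto\bar\Lambda(\nu,x)$ is continuous for the product of the weak$^*$ and Euclidean topologies.
   Context: $\Omega\subset\mathbb{R}^d$ compact, $\tilde\Omega=\Omega\times[0,1]$, $C>0$, $\sigma\in(0,1)$, $\bar\mu$ the time marginal of $\mu$. $\mathrm{Lip}_C^\sigma(\tilde\Omega)$: all $\mu\in\mathcal{P}(\tilde\Omega)$ with $\bar\mu(\{0\})\ge\sigma$ admitting a disintegration $d\mu(x,s)=d\mu(x|s)d\bar\mu(s)$ with $W_2(\mu(\cdot|s),\mu(\cdot|t))\le C|s-t|$ for all $s,t$. Masked measure: $\mu_t=\frac{1_{[0,t]}}{\bar\mu([0,t])}\cdot\mu$, $t\in[0,1]$. Causal: $\Lambda(\mu,x,t)=\Lambda(\mu_t,x,t)$. Identifiable: $\mu_t=\mu_{t'}$ implies $\Lambda(\mu_t,\cdot,t)=\Lambda(\mu_{t'},\cdot,t')$. Reduced map: $\bar\Lambda(\mu,x)=\Lambda(\mu,x,e(\bar\mu))$ where $e(\bar\mu)=\max\operatorname{supp}(\bar\mu)$. $\mathcal{X}_C^\sigma=\{(\mu_t,x):\mu\in\mathrm{Lip}_C^\sigma(\tilde\Omega),x\in\Omega,t\in[0,1]\}$.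 *)

(* Defs.v *)
From HB Require Import structures.
From mathcomp Require Import all_boot all_order all_algebra.
From mathcomp Require Import all_classical all_reals all_analysis.
From mathcomp Require Import measurable_realfun.

Set Implicit Arguments.
Unset Strict Implicit.
Unset Printing Implicit Defensive.

Import Order.TTheory GRing.Theory Num.Theory.
Import numFieldNormedType.Exports.

Local Open Scope classical_set_scope.
Local Open Scope ring_scope.

(* Borel sigma-algebra on R^d = 'rV[R]_d (generated by the open sets of its
   usual topology, which is the Euclidean topology). *)
Section Rd_borel.
Context (R : realType) (d : nat).

HB.instance Definition _ :=
  @isMeasurable.Build (sigma_display (@open 'rV[R]_d)) 'rV[R]_d
    <<s open >> (@sigma_algebra0 _ setT open) (@sigma_algebraC _ open)
    (@sigma_algebra_bigcup _ setT open).

End Rd_borel.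

Section defs.
Context (R : realType) (d : nat).
Local Notation X := 'rV[R]_d.
Local Notation T := ('rV[R]_d * R)%type.

Definition I01 : set R := `[0%R, 1%R]%classic.

Definition enorm (n : nat) (v : 'rV[R]_n) : R :=
  Num.sqrt (\sum_(i < n) v ord0 i ^+ 2).

Definition Otilde (Om : set X) : set T := Om `*` I01.

Definition is_prob (mu : set T -> \bar R) : Prop :=
  exists P : probability T R, (P : set T -> \bar R) = mu.

Definition tmarg (mu : set T -> \bar R) : set R -> \bar R :=
  pushforward mu snd.

Definition couplings (p q : set X -> \bar R) : set (probability (X * X)%type R) :=
  [set pi | forall A, measurable A ->
      pi (A `*` setT) = p A /\ pi (setT `*` A) = q A].

Definition W2sq (p q : set X -> \bar R) : \bar R :=
  ereal_inf [set (\int[pi]_z ((enorm (z.1 - z.2)) ^+ 2)%:E)%E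
            | pi in couplings p q].

Definition LipCs (C sigma : R) (Om : set X) (mu : set T -> \bar R) : Prop :=
  [/\ is_prob mu, mu (Otilde Om) = 1%E,
      (sigma%:E <= tmarg mu [set 0%R])%E &
      exists K : R -> probability X R,
        [/\ (forall s, I01 s -> K s Om = 1%E),
            (forall A, measurable A -> measurable_fun I01 (fun s => K s A)),
            (forall A B, measurable A -> measurable B ->
               mu (A `*` B) = integral (tmarg mu) (B `&` I01) (fun s => K s A)) &
            (forall s t, I01 s -> I01 t ->
               (W2sq (K s) (K t) <= ((C * `|s - t|) ^+ 2)%:E)%E)]].

Definition maskm (mu : set T -> \bar R) (t : R) : set T -> \bar R :=
  fun A => (mu (A `&` (snd @^-1` `[0%R, t]%classic)) *
            ((fine (tmarg mu `[0%R, t]%classic))^-1)%:E)%E.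

Definition msupp (m : set R -> \bar R) : set R :=
  [set s : R | forall e : R, 0 < e -> (0 < m `](s - e)%R, (s + e)%R[%classic)%E].

Definition e_end (m : set R -> \bar R) : R := sup (msupp m).

Context (d' : nat).
Local Notation Map := ((set T -> \bar R) -> X -> R -> 'rV[R]_d').

Definition causal (C sigma : R) (Om : set X) (Lam : Map) : Prop :=
  forall mu x t, LipCs C sigma Om mu -> Om x -> I01 t ->
    Lam mu x t = Lam (maskm mu t) x t.

Definition identifiable (C sigma : R) (Om : set X) (Lam : Map) : Prop :=
  forall mu t t', LipCs C sigma Om mu -> I01 t -> I01 t' ->
    (forall A, measurable A -> maskm mu t A = maskm mu t' A) ->
    forall x, Om x -> Lam (maskm mu t) x t = Lam (maskm mu t') x t'.

Definition reduced (Lam : Map) (mu : set T -> \bar R) (x : X) : 'rV[R]_d' :=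
  Lam mu x (e_end (tmarg mu)).

(* nu lies in the basic weak-* neighbourhood of mu given by the finite
   family of test functions fs (continuous on tilde Omega) and radius delta *)
Definition wclose (Om : set X) (n : nat) (fs : 'I_n -> T -> R) (delta : R)
    (mu nu : set T -> \bar R) : Prop :=
  forall i, `| fine (integral nu (Otilde Om) (fun z => (fs i z)%:E))
             - fine (integral mu (Otilde Om) (fun z => (fs i z)%:E)) | < delta.

(* continuity of Lam on Lip x tilde Omega, for the product of the weak-*
   topology (test functions C(tilde Omega)) and the Euclidean topology *)
Definition Lam_continuous (C sigma : R) (Om : set X) (Lam : Map) : Prop :=
  forall mu x t, LipCs C sigma Om mu -> Om x -> I01 t ->
  forall eps, 0 < eps ->
  exists n (fs : 'I_n -> T -> R) delta,
    [/\ forall i, {within Otilde Om, continuous (fs i)}, 0 < delta &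
        forall nu y s, LipCs C sigma Om nu -> Om y -> I01 s ->
          wclose Om fs delta mu nu -> enorm (y - x) < delta ->
          `|s - t| < delta ->
          enorm (Lam nu y s - Lam mu x t) < eps].

Definition Xset (C sigma : R) (Om : set X) (nu : set T -> \bar R) (x : X) : Prop :=
  exists mu t, [/\ LipCs C sigma Om mu, I01 t, nu = maskm mu t & Om x].

Definition reduced_continuous (C sigma : R) (Om : set X) (Lam : Map) : Prop :=
  forall nu x, Xset C sigma Om nu x ->
  forall eps, 0 < eps ->
  exists n (fs : 'I_n -> T -> R) delta,
    [/\ forall i, {within Otilde Om, continuous (fs i)}, 0 < delta &
        forall nu' y, Xset C sigma Om nu' y ->
          wclose Om fs delta nu nu' -> enorm (y - x) < delta ->
          enorm (reduced Lam nu' y - reduced Lam nu x) < eps].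

End defs.

(* Main.v *)
Require Import Defs.
From HB Require Import structures.
From mathcomp Require Import all_boot all_order all_algebra.
From mathcomp Require Import all_classical all_reals all_analysis.
From mathcomp Require Import measurable_realfun finmap.
From mathcomp.algebra_tactics Require Import ring lra.
Import Order.TTheory GRing.Theory Num.Theory.
Import numFieldNormedType.Exports.
Local Open Scope classical_set_scope.
Local Open Scope ring_scope.

Section aux2.
Context (R : realType).

Lemma integral_mrestr (m : {measure set R -> \bar R}) (E D : set R)
  (mE : measurable E) (mD : measurable D) (f : R -> \bar R) :
  measurable_fun D f -> (forall x, D x -> (0 <= f x)%E) ->
  (\int[mrestr m mE]_(x in D) f x = \int[m]_(x in D `&` E) f x)%E.
Proof.
move=> mf f0.
have DE : D = (D `&` E) `|` (D `\` E).
  apply/seteqP; split=> x.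
    by move=> Dx; case: (pselect (E x)) => Ex; [left | right].
  by case=> -[].
have mDE : measurable (D `&` E) by exact: measurableI.
have mDdE : measurable (D `\` E) by exact: measurableD.
rewrite [in LHS]DE ge0_integral_setU //; last 3 first.
- by rewrite -DE.
- by rewrite -DE.
- by rewrite disj_set2E; apply/eqP/seteqP; split=> x // [[_ Ex] [_ nEx]].
rewrite [X in (_ + X)%E]null_set_integral //; last 2 first.
- exact: measurable_funS mf.
- change (m ((D `\` E) `&` E) = 0%E).
  rewrite (_ : (D `\` E) `&` E = set0) ?measure0 //.
  by apply/seteqP; split=> x // [[_ nEx] Ex].
rewrite adde0; apply: eq_measure_integral => A mA AD.
change (m (A `&` E) = m A); rewrite setIidl //; by move=> x /AD [].
Qed.

End aux2.

Section aux.
Context (R : realType) (d : nat).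
Local Notation X := 'rV[R]_d.
Local Notation T := ('rV[R]_d * R)%type.

Lemma msnd (B : set R) : measurable B -> measurable ((@snd X R) @^-1` B).
Proof.
move=> mB; have := @measurable_snd _ _ X R measurableT B mB.
by rewrite setTI; apply.
Qed.

Lemma null_cup (Q : {measure set T -> \bar R}) (I : choiceType) (f : I -> set R)
  (s : seq I) : (forall i, i \in s -> measurable (f i) /\ Q (snd @^-1` f i) = 0%E) ->
  measurable (\big[setU/set0]_(i <- s) f i) /\
  Q (snd @^-1` \big[setU/set0]_(i <- s) f i) = 0%E.
Proof.
elim: s => [|x s IH] H; first by rewrite big_nil preimage_set0 measure0.
have [IH1 IH2] : measurable (\big[setU/set0]_(i <- s) f i) /\
  Q (snd @^-1` \big[setU/set0]_(i <- s) f i) = 0%E.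
  by apply: IH => i iS; apply: H; rewrite in_cons iS orbT.
have [Hx1 Hx2] := H x (mem_head _ _).
rewrite big_cons; split; first exact: measurableU.
rewrite preimage_setU null_set_setU //; exact: msnd.
Qed.

Lemma Qle (Q : {measure set T -> \bar R}) (A B : set R) :
  measurable A -> measurable B -> A `<=` B ->
  (Q (snd @^-1` A) <= Q (snd @^-1` B))%E.
Proof.
move=> mA mB AB; apply: le_measure; try (apply: mem_set; exact: msnd).
by move=> x; apply: AB.
Qed.

Lemma supp_end (Q : probability T R) (sigma : R) : 0 < sigma ->
  (sigma%:E <= Q (snd @^-1` [set 0%R]))%E ->
  Q (snd @^-1` (~` `[0, 1]%classic)) = 0%E ->
  0 <= e_end (tmarg Q) <= 1 /\
  Q (snd @^-1` `](e_end (tmarg Q)), 1]%classic) = 0%E.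
Proof.
move=> s0 Qs Qout.
set m := tmarg Q; set E := msupp m; set e := e_end m.
have mge0 B : measurable B -> (0 <= Q (snd @^-1` B))%E.
  by move=> mB; apply: measure_ge0; exact: msnd.
have E01 : forall s, E s -> 0 <= s <= 1.
  move=> s Es; apply/negPn/negP => ns.
  have [eps [ep0 sub]] : exists eps, 0 < eps /\
      `](s - eps), (s + eps)[%classic `<=` ~` `[0, 1]%classic.
    move: ns; rewrite negb_and -!ltNge => /orP[sn|sp].
      exists (- s); split; first by rewrite oppr_gt0.
      move=> x /=; rewrite !in_itv /= => /andP[_ h] /andP[h1 _]; lra.
    exists (s - 1); split; first by rewrite subr_gt0.
    move=> x /=; rewrite !in_itv /= => /andP[h _] /andP[_ h1]; lra.
  have := Es eps ep0; rewrite /m /tmarg /pushforward.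
  have : (Q (snd @^-1` `](s - eps)%R, (s + eps)%R[%classic) <=
          Q (snd @^-1` (~` `[0%R, 1%R]%classic)))%E.
    apply: (@Qle Q); [exact: measurable_itv | | exact: sub].
    by apply: measurableC; exact: measurable_itv.
  by rewrite Qout => h1 h2; move: (lt_le_trans h2 h1); rewrite ltxx.
have E0 : E 0.
  move=> eps ep0; rewrite /m /tmarg /pushforward.
  apply: (lt_le_trans _ (le_trans Qs _)); first by rewrite lte_fin.
  apply: (@Qle Q); [exact: measurable_set1 | exact: measurable_itv |].
  move=> x /= ->; rewrite in_itv /=; apply/andP; split; lra.
have hs : has_sup E by split; [exists 0 | exists 1 => x /E01 /andP[]].
have e0 : 0 <= e by apply: sup_upper_bound.
have e1 : e <= 1 by apply: ge_sup; [exists 0 | move=> x /E01 /andP[]].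
split; first by rewrite e0 e1.
have key : forall a, e < a -> Q (snd @^-1` `[a, 1]%classic) = 0%E.
  move=> a ea.
  have cpt := @segment_compact R a 1; rewrite compact_cover in cpt.
  pose D := [set p : R * R | 0 < p.2 /\
               Q (snd @^-1` `](p.1 - p.2), (p.1 + p.2)[%classic) = 0%E].
  pose f := fun p : R * R => `](p.1 - p.2), (p.1 + p.2)[%classic.
  have cov0 : `[a, 1]%classic `<=` cover D f.
    move=> x /=; rewrite in_itv /= => /andP[ax x1].
    have nEx : ~ E x.
      move=> Ex; have xe : x <= e by exact: (sup_upper_bound hs Ex).
      lra.
    move: nEx; rewrite /E /msupp /= => /existsNP [eps /not_implyP [ep0 nQ]].
    exists (x, eps) => /=.
      split => //; apply/eqP; rewrite eq_le; apply/andP; split.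
        by rewrite leNgt; apply/negP.
      by apply: mge0; exact: measurable_itv.
    rewrite /f /= in_itv /=; apply/andP; split; lra.
  have [D' sD cov] := cpt _ D f (fun i _ => itv_open _ _) cov0.
  have HD : forall i, i \in enum_fset D' -> measurable (f i) /\ Q (snd @^-1` f i) = 0%E.
    move=> i iD; have := sD i iD; rewrite in_setE => -[_ h]; split => //.
    exact: measurable_itv.
  have [H1 H0] := @null_cup Q _ f (enum_fset D') HD.
  apply/eqP; rewrite eq_le; apply/andP; split; last first.
    by apply: mge0; exact: measurable_itv.
  rewrite -H0; apply: (@Qle Q `[a, 1]%classic (\big[setU/set0]_(i <- enum_fset D') f i)). 
    all: try exact: measurable_itv; try exact: H1.
  by move=> x /cov; rewrite /cover bigcup_fset.
have mF n : measurable (snd @^-1` `[(e + (n.+1%:R)^-1), 1]%classic : set T).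
  by apply: msnd; exact: measurable_itv.
have mA : measurable (snd @^-1` `]e, 1]%classic : set T).
  by apply: msnd; exact: measurable_itv.
have cov : (snd @^-1` `]e, 1]%classic : set T) `<=`
    \bigcup_n (snd @^-1` `[(e + (n.+1%:R)^-1), 1]%classic).
  move=> [y x] /=; rewrite in_itv /= => /andP[ex x1].
  exists (Num.truncn ((x - e)^-1)) => //=; rewrite in_itv /= x1 andbT.
  have xe0 : 0 < x - e by rewrite subr_gt0.
  have h := truncnS_gt ((x - e)^-1).
  have : ((Num.truncn (x - e)^-1).+1%:R)^-1 < x - e.
    rewrite -[X in _ < X]invrK ltf_pV2 //; rewrite ?posrE ?invr_gt0 //.

  set a := (_.+1%:R)^-1; move=> hh; apply: ltW; lra.
have := @measure_sigma_subadditive _ _ _ Q _ _ mF mA cov.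
rewrite eseries0; last first.
  by move=> n _ _; apply: key; rewrite ltrDl invr_gt0 ltr0Sn.
move=> h; apply/eqP; rewrite eq_le h /=.
by apply: mge0; exact: measurable_itv.
Qed.


Lemma mask_e (Q : probability T R) (e : R) : 0 <= e <= 1 ->
  Q (snd @^-1` `]e, 1]%classic) = 0%E ->
  forall A, measurable A -> maskm Q e A = maskm Q 1 A.
Proof.
move=> /andP[e0 e1]; set N := (snd @^-1` `]e, 1]%classic : set T) => QN.
have H A : measurable A ->
    Q (A `&` snd @^-1` `[0, e]%classic) = Q (A `&` snd @^-1` `[0, 1]%classic).
  move=> mA.
  have mSe : measurable (snd @^-1` `[0, e]%classic : set T).
    by apply: msnd; exact: measurable_itv.
  have mS1 : measurable (snd @^-1` `[0, 1]%classic : set T).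
    by apply: msnd; exact: measurable_itv.
  have mN : measurable N.
    by apply: msnd; exact: measurable_itv.
  apply/eqP; rewrite eq_le; apply/andP; split.
    apply: le_measure; rewrite ?in_setE; try exact: measurableI.
    move=> [y x] [Ay]; rewrite /preimage /= !in_itv /= => /andP[x0 xe].
    by split => //; rewrite x0 /=; apply: le_trans e1.
  apply: (le_trans (y := Q ((A `&` snd @^-1` `[0, e]%classic) `|` N))).
    apply: le_measure; rewrite ?in_setE; try exact: measurableI.
      by apply: measurableU => //; exact: measurableI.
    move=> [y x] [Ay]; rewrite /preimage /= !in_itv /= => /andP[x0 x1].
    case: (leP x e) => xe; [left | right]; rewrite /N /preimage /= ?in_itv /= ?x0 ?xe ?x1 //.
  have mAe : measurable (A `&` snd @^-1` `[0, e]%classic) by exact: measurableI.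
  apply: (le_trans (measureU2 Q mAe mN)).
  set q := (X in (_ + X <= _)%E); have -> : q = 0%E by exact: QN.
  by rewrite adde0.
move=> A mA; rewrite /maskm /tmarg /pushforward H //.
have := H setT measurableT; rewrite !setTI => ->.
by [].
Qed.

Lemma Om_meas (Om : set X) : compact Om -> measurable Om.
Proof.
move=> cO; have cl : closed Om := compact_closed (@norm_hausdorff _ _) cO.
rewrite -(setCK Om); apply: measurableC; apply: sub_sigma_algebra.
by rewrite openC.
Qed.

Lemma Otilde_meas (Om : set X) : compact Om -> measurable (Otilde Om).
Proof. by move=> cO; apply: measurableX; [exact: Om_meas | exact: measurable_itv]. Qed.

Lemma mask_Lip (C sigma : R) (Om : set X) (mu : set T -> \bar R) (t : R) :
  compact Om -> 0 < sigma -> LipCs C sigma Om mu -> I01 t ->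
  LipCs C sigma Om (maskm mu t) /\
  (forall s, t <= s -> maskm (maskm mu t) s = maskm mu t).
Proof.
move=> cO s0 [[P HP] HOm Hs [K [K1 K2 K3 K4]]] It.
subst mu.
have [t0 t1] : 0 <= t /\ t <= 1.
  by move: It; rewrite /I01 /= in_itv /= => /andP[].
have m0t : measurable (`[0, t]%classic : set R) by exact: measurable_itv.
set St := (snd @^-1` `[0, t]%classic : set T).
have mSt : measurable St by exact: msnd.
have mS0 : measurable (snd @^-1` [set 0%R] : set T).
  by apply: msnd; exact: measurable_set1.
have S0St : (snd @^-1` [set 0%R] : set T) `<=` St.
  by move=> [y x] /= ->; rewrite /St /preimage /= in_itv /= lexx t0.
have P0fin : P (snd @^-1` [set 0%R]) \is a fin_num.
  by rewrite fin_num_measure.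
have PStfin : P St \is a fin_num by rewrite fin_num_measure.
set a := fine (P (snd @^-1` [set 0%R])).
set ct := fine (P St).
have Pa : P (snd @^-1` [set 0%R]) = a%:E by rewrite fineK.
have Pct : P St = ct%:E by rewrite fineK.
have sa : sigma <= a by rewrite -lee_fin -Pa.
have act : a <= ct.
  rewrite -lee_fin -Pa -Pct; apply: le_measure; rewrite ?in_setE //.
have ct0 : 0 < ct by lra.
have ct1 : ct <= 1 by rewrite -lee_fin -Pct probability_le1.
have ct0' : ct != 0 by rewrite gt_eqF.
pose Qn := mnormalize (mrestr P mSt) P.
have Qeq : (Qn : set T -> \bar R) = maskm P t.
  apply/funext => U; rewrite /Qn /mnormalize /= /mrestr setTI -/St Pct.
  rewrite eqe (negbTE ct0') /= /maskm /tmarg /pushforward -/St Pct.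
  by [].
have mask_nu U : maskm P t U = (P (U `&` St) * (ct^-1)%:E)%E.
  by rewrite /maskm /tmarg /pushforward -/St Pct.
have mI01 : measurable (@I01 R) by exact: measurable_itv.
split; last first.
  move=> s ts; apply/funext => U.
  have StSs : St `<=` snd @^-1` `[0, s]%classic.
    move=> [y x]; rewrite /St /preimage /= !in_itv /= => /andP[x0 xt].
    by rewrite x0 /=; apply: le_trans ts.
  rewrite {1}/maskm /tmarg /pushforward !mask_nu -setIA !(setIidr StSs) Pct.
  by rewrite -EFinM mulfV //= invr1 mule1.
split.
- by exists Qn.
- rewrite mask_nu.
  have mOt := Otilde_meas Om cO.
  have -> : P (Otilde Om `&` St) = P St.
    have h0 : P (St `\` Otilde Om) = 0%E.
      have mSD : measurable (St `\` Otilde Om) by exact: measurableD.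
      apply/eqP; rewrite eq_le [X in _ && X]measure_ge0 // andbT.
      rewrite -[leRHS](_ : 1 - P (Otilde Om) = 0)%E; last by rewrite HOm subee.
      rewrite -probability_setC //; apply: le_measure; rewrite ?in_setE //.
        exact: measurableC.
    rewrite [RHS](measureDI P mSt mOt) setIC.
    set q := (X in (X + _)%E); have -> : q = 0%E by exact: h0.
    by rewrite add0e.
  by rewrite Pct -EFinM mulfV.
- rewrite /tmarg /pushforward mask_nu (setIidl S0St) Pa -EFinM lee_fin.
  rewrite ler_pdivlMr //; nra.
- exists K; split => //.
  move=> A B mA mB.
  rewrite mask_nu.
  have -> : (A `*` B) `&` St = A `*` (B `&` `[0, t]%classic).
    by apply/seteqP; split => -[y x] /=; [move=> [[Ay Bx] tx] | move=> [Ay [Bx tx]]].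
  rewrite K3 //; last exact: measurableI.
  have cinv0 : 0 <= ct^-1 by rewrite invr_ge0 ltW.
  pose PF := measure_function_pushforward__canonical__measure_function_Measure
               P (f := snd) (@measurable_snd _ _ X R).
  have Etm : tmarg (maskm P t) = mscale (NngNum cinv0) (mrestr PF m0t).
    apply/funext => U; rewrite /tmarg /pushforward mask_nu /mscale /mrestr /=.
    by rewrite /mrestr /pushforward preimage_setI muleC.
  have mBI : measurable (B `&` @I01 R) by exact: measurableI.
  have mf : measurable_fun (B `&` @I01 R) (fun s => K s A).
    by apply: (measurable_funS mI01 _ (K2 A mA)) => x [].
  have f0 : forall x, (B `&` @I01 R) x -> (0 <= K x A)%E.
    by move=> x _; apply: measure_ge0.
  rewrite Etm ge0_integral_mscale // integral_mrestr //= muleC.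
  by rewrite setIAC.
Qed.


Lemma Lip_supp (C sigma : R) (Om : set X) (rho : set T -> \bar R) :
  compact Om -> 0 < sigma -> LipCs C sigma Om rho ->
  0 <= e_end (tmarg rho) <= 1 /\
  forall A, measurable A -> maskm rho (e_end (tmarg rho)) A = maskm rho 1 A.
Proof.
move=> cO s0 [[P HP] HOm Hs _]; subst rho.
have mOt := Otilde_meas Om cO.
have out : P (snd @^-1` (~` `[0, 1]%classic)) = 0%E.
  have mS : measurable (snd @^-1` (~` `[0, 1]%classic) : set T).
    by apply: msnd; apply: measurableC; exact: measurable_itv.
  apply/eqP; rewrite eq_le [X in _ && X]measure_ge0 // andbT.
  rewrite -[leRHS](_ : 1 - P (Otilde Om) = 0)%E; last by rewrite HOm subee.
  rewrite -probability_setC //; apply: le_measure; rewrite ?in_setE //.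
    exact: measurableC.
  by move=> [y x] /= nx [_ Ix]; apply: nx.
have [h1 h2] := supp_end P sigma s0 Hs out.
by split => //; apply: mask_e.
Qed.

End aux.
Arguments mask_Lip {R d}.
Arguments Lip_supp {R d}.

Theorem lemma4p7 (R : realType) (d d' : nat) (Om : set 'rV[R]_d) (C sigma : R)
    (Lam : (set ('rV[R]_d * R) -> \bar R) -> 'rV[R]_d -> R -> 'rV[R]_d') :
  compact Om -> 0 < C -> 0 < sigma < 1 ->
  causal C sigma Om Lam -> identifiable C sigma Om Lam ->
  (forall mu x t, LipCs C sigma Om mu -> Om x -> I01 t ->
     Lam mu x t = reduced Lam (maskm mu t) x) /\
  (Lam_continuous C sigma Om Lam -> reduced_continuous C sigma Om Lam).
Proof.
move=> cO C0 /andP[s0 s1] caus ident.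
have I1 : I01 (1 : R) by rewrite /I01 /= in_itv /= ler01 lexx.
have key : forall mu x t, LipCs C sigma Om mu -> Om x -> I01 t ->
    Lam mu x t = Lam (maskm mu t) x 1 /\
    Lam (maskm mu t) x 1 = reduced Lam (maskm mu t) x.
  move=> mu x t Lmu Ox It.
  have [Lnu nuid] := mask_Lip _ _ _ _ _ cO s0 Lmu It.
  have t1 : t <= 1 by move: It; rewrite /I01 /= in_itv /= => /andP[].
  have [e01 me] := Lip_supp _ _ _ _ cO s0 Lnu.
  set nu := maskm mu t in Lnu nuid e01 me *.
  have Ie : I01 (e_end (tmarg nu)) by rewrite /I01 /= in_itv /=.
  have h1 : Lam nu x t = Lam nu x 1.
    have eqm : forall A, measurable A -> maskm nu t A = maskm nu 1 A.
      by move=> A _; rewrite (nuid t) // (nuid 1).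
    by have := ident nu t 1 Lnu It I1 eqm x Ox; rewrite (nuid t) // (nuid 1).
  split; first by rewrite caus // h1.
  rewrite /reduced [RHS]caus //.
  rewrite (ident nu (e_end (tmarg nu)) 1 Lnu Ie I1 me x Ox).
  by rewrite (nuid 1).
split.
  by move=> mu x t Lmu Ox It; have [-> ->] := key mu x t Lmu Ox It.
move=> cont nu x [mu [t [Lmu It -> Ox]]] eps eps0.
have [Lnu _] := mask_Lip _ _ _ _ _ cO s0 Lmu It.
have [n [fs [delta [fc d0 H]]]] := cont _ x 1 Lnu Ox I1 eps eps0.
exists n, fs, delta; split => // nu' y [mu' [t' [Lmu' It' -> Oy]]] wc yx.
have [Lnu' _] := mask_Lip _ _ _ _ _ cO s0 Lmu' It'.
rewrite -(key mu x t Lmu Ox It).2 -(key mu' y t' Lmu' Oy It').2.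
by apply: H => //; rewrite subrr normr0.
Qed.
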